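(* Let $G$ be a connected simple graph with at least $2$ vertices and let $v\in V(G)$. Then $$\chi_{dom}(G)-\deg v+1\leq \chi_{dom}(G\odot v)\leq \chi_{dom}(G)+1.$$
   Context: All graphs are finite and simple. A dominated coloring of a graph $H$ is a proper vertex coloring of $H$ such that for every color class $C$ there is a vertex $x\in V(H)$ adjacent to every vertex of $C$. The dominated chromatic number $\chi_{dom}(H)$ is the minimum number of colors in a dominated coloring of $H$. $G\odot v$ denotes the graph obtained from $G$ by removing every edge joining two neighbours of $v$ ($v$ itself and all other edges are kept). $\deg v$ is the degree of $v$ in $G$. *)

(* Defs.v *)
From mathcomp Require Import all_boot.
From Stdlib Require Import ClassicalDescription.
Set Implicit Arguments. Unset Strict Implicit. Unset Printing Implicit Defensive.

Section Graph.
Variable T : finType.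

Definition simple_graph (e : rel T) : Prop :=
  symmetric e /\ irreflexive e.

Definition connected_graph (e : rel T) : Prop :=
  forall x y : T, connect e x y.

Definition deg (e : rel T) (v : T) : nat := #|[set u | e v u]|.

Definition odot (e : rel T) (v : T) : rel T :=
  [rel x y | e x y && ~~ (e v x && e v y)].

Definition dominated_coloring (e : rel T) (k : nat) (c : T -> 'I_k) : bool :=
  [forall x, forall y, e x y ==> (c x != c y)] &&
  [forall i : 'I_k, exists x : T, forall y : T, (c y == i) ==> e x y].

Definition has_dom_coloring (e : rel T) (k : nat) : bool :=
  [exists c : {ffun T -> 'I_k}, dominated_coloring e c].

(* chi_dom: least k admitting a dominated coloring with k colors
   (0 if none exists, which never happens in the theorem's setting) *)
Definition chi_dom (e : rel T) : nat :=
  match excluded_middle_informative (exists k, has_dom_coloring e k) with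
  | left H => ex_minn H
  | right _ => 0
  end.
End Graph.

(* Main.v *)
Require Import Defs.
From mathcomp Require Import all_boot.
From mathcomp Require Import zify.
From Stdlib Require Import ClassicalDescription.
Set Implicit Arguments. Unset Strict Implicit. Unset Printing Implicit Defensive.

Section Aux.
Variable T : finType.

Definition natcol (e : rel T) (K : nat) (f : T -> nat) : Prop :=
  (forall y, f y < K) /\ (forall x y, e x y -> f x != f y) /\
  (forall y0, exists x, forall y, f y = f y0 -> e x y).

Lemma natcol_has (e : rel T) K f (x0 : T) : natcol e K f -> has_dom_coloring e K.
Proof.
move=> [Hb [Hp Hd]].
apply/existsP; exists (finfun (fun y => Ordinal (Hb y))).
apply/andP; split.
  apply/forallP => x; apply/forallP => y; apply/implyP => Hxy.
  rewrite !ffunE; apply/negP => /eqP [] /eqP; apply/negP; exact: Hp.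
apply/forallP => i.
case: (boolP [exists y0, f y0 == i]) => [/existsP [y0 /eqP Hy0]|Hn].
  have [x Hx] := Hd y0; apply/existsP; exists x; apply/forallP => y.
  apply/implyP; rewrite ffunE => /eqP Hy; apply: Hx.
  by rewrite Hy0 -Hy.
apply/existsP; exists x0; apply/forallP => y; apply/implyP; rewrite ffunE => /eqP Hy.
exfalso; move/existsP: Hn; apply; exists y; by rewrite -Hy.
Qed.

Lemma has_natcol (e : rel T) K : has_dom_coloring e K -> exists f, natcol e K f.
Proof.
move=> /existsP [c /andP [/forallP Hp /forallP Hd]].
exists (fun y => val (c y)); split; first by move=> y; exact: ltn_ord.
split.
  move=> x y Hxy; have := Hp x; move/forallP/(_ y)/implyP/(_ Hxy).
  by rewrite val_eqE.
move=> y0; have /existsP [x /forallP Hx] := Hd (c y0); exists x => y Hy.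
have := Hx y; move/implyP; apply; apply/eqP; exact: val_inj.
Qed.

Lemma chi_le (e : rel T) k : has_dom_coloring e k -> chi_dom e <= k.
Proof.
move=> Hk; rewrite /chi_dom; case: excluded_middle_informative => [H|H] //.
case: ex_minnP => m _ Hmin; exact: Hmin.
Qed.

Lemma chi_has (e : rel T) k : has_dom_coloring e k -> has_dom_coloring e (chi_dom e).
Proof.
move=> Hk; rewrite /chi_dom; case: excluded_middle_informative => [H|H].
  by case: ex_minnP.
by exfalso; apply: H; exists k.
Qed.

Lemma nbr (e : rel T) : connected_graph e -> 1 < #|T| -> forall y0, exists a, e y0 a.
Proof.
move=> Hc HT y0.
case: (pickP (predC1 y0)) => [z Hz | H].
  have := Hc y0 z; case/connectP => p; case: p => [|a p] /=.
    by move=> _ Hzy; rewrite /= Hzy eqxx in Hz.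
  by move=> /andP [Ha _] _; exists a.
exfalso; move: HT; apply/negP; rewrite -leqNgt -(card1 y0).
apply: subset_leq_card; apply/subsetP => z _; have := H z; rewrite /= => /negbFE.
by rewrite inE.
Qed.

End Aux.

Theorem theorem3p6 (T : finType) (e : rel T) (v : T) :
  simple_graph e -> connected_graph e -> 1 < #|T| ->
  chi_dom e + 1 <= chi_dom (odot e v) + deg e v /\
  chi_dom (odot e v) <= chi_dom e + 1.
Proof.
move=> [Hsym Hirr] Hc HT.
have Hn := nbr Hc HT.
have Hex : has_dom_coloring e #|T|.
  apply: (@natcol_has _ e _ (fun y => val (enum_rank y)) v).
  split; first by move=> y; exact: ltn_ord.
  split.
    move=> x y Hxy; rewrite val_eqE; apply/negP => /eqP /enum_rank_inj Exy.
    by rewrite Exy Hirr in Hxy.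
  move=> y0; have [a Ha] := Hn y0; exists a => y /val_inj /enum_rank_inj ->.
  by rewrite Hsym.
set k := chi_dom e.
have [c [Hcb [Hcp Hcd]]] := has_natcol (chi_has Hex).
have Hup : has_dom_coloring (odot e v) k.+1.
  apply: (@natcol_has _ _ _ (fun y => if e v y then k else c y) v).
  split; first by move=> y; case: (e v y) => //; apply: ltnW; apply: Hcb.
  split.
    move=> x y /andP [Hxy Hn2].
    case Ex: (e v x); case Ey: (e v y); rewrite Ex Ey /= in Hn2.
    - by [].
    - by rewrite neq_ltn Hcb orbT.
    - by rewrite neq_ltn Hcb.
    - exact: Hcp.
  move=> y0; case Ey0: (e v y0).
    exists v => y; case Ey: (e v y) => Hy.
      by rewrite /odot /= Ey Hirr.
    by have := Hcb y; rewrite Hy ltnn.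
  have [x Hx] := Hcd y0; exists x => y.
  case Ey: (e v y) => Hy.
    by have := Hcb y0; rewrite -Hy ltnn.
  by rewrite /odot /= Hx // Ey andbF.
have Hup' := chi_le Hup.
split; last by rewrite addn1.
set m := chi_dom (odot e v).
have [c2 [Hb2 [Hp2 Hd2]]] := has_natcol (chi_has Hup).
set N := [set u | e v u].
set s := enum N.
have Hds : deg e v = size s by rewrite /deg cardE.
have Hd1 : 0 < deg e v.
  have [a Ha] := Hn v; rewrite /deg; apply/card_gt0P; exists a; by rewrite inE.
have memN : forall y, (y \in s) = e v y by move=> y; rewrite mem_enum inE.
pose r y := e v y && (0 < index y s).
have Hlow : has_dom_coloring e (m + (deg e v).-1).
  apply: (@natcol_has _ _ _ (fun y => if r y then m + (index y s).-1 else c2 y) v).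
  split.
    move=> y; rewrite /r; case Ey: (e v y) => /=.
      case: ifP => Hi.
        have : index y s < size s by rewrite index_mem memN.
        rewrite -Hds; lia.
      have := Hb2 y; lia.
    have := Hb2 y; lia.
  split.
    move=> x y Hxy.
    case Rx: (r x); case Ry: (r y).
    - apply/negP => /eqP Heq.
      move: Rx Ry; rewrite /r => /andP [Ex Ix] /andP [Ey Iy].
      have Hi : index x s = index y s by lia.
      have Exy : x = y.
        by rewrite -(nth_index v (_ : x \in s)) ?memN // Hi nth_index ?memN.
      by rewrite Exy Hirr in Hxy.
    - have := Hb2 y; apply: contraTneq => <-; lia.
    - have := Hb2 x; apply: contraTneq => ->; lia.
    - apply: Hp2; rewrite /odot /= Hxy /=; apply/negP => /andP [Ex Ey].
      move: Rx Ry; rewrite /r Ex Ey /= => /negbT Ix /negbT Iy.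
      rewrite -leqNgt leqn0 in Ix; rewrite -leqNgt leqn0 in Iy.
      have Exy : x = y.
        rewrite -(nth_index v (_ : x \in s)) ?memN // (eqP Ix).
        by rewrite -(eqP Iy) nth_index ?memN.
      by rewrite Exy Hirr in Hxy.
  move=> y0; case R0: (r y0).
    exists v => y; case Ry: (r y).
      by move: Ry => /andP [].
    by have := Hb2 y; lia.
  have [x Hx] := Hd2 y0; exists x => y.
  case Ry: (r y) => Hy.
    by have := Hb2 y0; lia.
  by have := Hx y Hy; rewrite /odot /= => /andP [].
have := chi_le Hlow; rewrite -/k; lia.
Qed.
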